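(* Fix a valid ILA model and a secret parameter $\mathsf{sp}\in\mathcal{SP}$. Suppose $\mathsf{topub}(\mathsf{sp});\Gamma\vdash e:\tau$ and $\mathsf{sp};\Gamma\vDash\gamma$. Then there are values $v$ and $v_{\mathsf{msg}}$ with $\langle\gamma,e\rangle\Downarrow v$ and $\langle\mathsf{interp}^{\mathsf{sp}}_\Gamma(\gamma),e\rangle\Downarrow^{\mathsf{sp}}_{\mathsf{msg}}v_{\mathsf{msg}}$ such that $\mathsf{interp}^{\mathsf{sp}}_{\mathsf{sort}(v)}(v)=v_{\mathsf{msg}}$.
   Context: An ILA model consists of: sets $\mathcal{PP}$ (public parameters) and $\mathcal{SP}$ (secret parameters) with a map $\mathsf{topub}:\mathcal{SP}\to\mathcal{PP}$; for each sort $s\in\{\mathsf{msg},\mathsf{plain},\mathsf{cipher}\}$ a carrier set $[\![s]\!]$ (the sort of a value $v$, written $\mathsf{sort}(v)$, is the $s$ with $v\in[\![s]\!]$) and a partially ordered set $(B_s,\le_s)$ of bounds; maps $|\cdot|^{\mathsf{pp}}_{\mathsf{msg}}:[\![\mathsf{msg}]\!]\to B_{\mathsf{msg}}$, $|\cdot|^{\mathsf{pp}}_{\mathsf{plain}}:[\![\mathsf{plain}]\!]\to B_{\mathsf{plain}}$ for $\mathsf{pp}\in\mathcal{PP}$, and $|\cdot|^{\mathsf{sp}}_{\mathsf{cipher}}:[\![\mathsf{cipher}]\!]\to B_{\mathsf{cipher}}$ for $\mathsf{sp}\in\mathcal{SP}$ (for $s\in\{\mathsf{msg},\mathsf{plain}\}$,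 $|\cdot|^{\mathsf{sp}}_s$ means $|\cdot|^{\mathsf{topub}(\mathsf{sp})}_s$); interpretation maps $\mathsf{interp}^{\mathsf{pp}}_{\mathsf{plain}}:[\![\mathsf{plain}]\!]\to[\![\mathsf{msg}]\!]$ (decoding), $\mathsf{interp}^{\mathsf{sp}}_{\mathsf{cipher}}:[\![\mathsf{cipher}]\!]\to[\![\mathsf{msg}]\!]$ (decryption), with $\mathsf{interp}^{\mathsf{pp}}_{\mathsf{msg}}$ the identity and $\mathsf{interp}^{\mathsf{sp}}_s:=\mathsf{interp}^{\mathsf{topub}(\mathsf{sp})}_s$ for $s\in\{\mathsf{msg},\mathsf{plain}\}$; and a set of operations, each $\mathsf{op}$ having an arity $s_1,\dots,s_n\to s$ and equipped with a total function $[\![\mathsf{op}]\!]:\prod_i[\![s_i]\!]\to[\![s]\!]$, a partial function $[\![\mathsf{op}]\!]^{\mathsf{pp}}_{\mathsf{bnd}}:\prod_i B_{s_i}\rightharpoonup B_s$ for each $\mathsf{pp}$, and a function $[\![\mathsf{op}]\!]_{\mathsf{msg}}:[\![\mathsf{msg}]\!]^n\to[\![\mathsf{msg}]\!]$. The model is valid if (Commutativity) for all $\mathsf{sp}$, all $\mathsf{op}:\vec s_i\to s$ and all $v_i\in[\![s_i]\!]$, if $[\![\mathsf{op}]\!]^{\mathsf{topub}(\mathsf{sp})}_{\mathsf{bnd}}(|v_1|^{\mathsf{sp}}_{s_1},\dots)=b$ is defined then $|[\![\mathsf{op}]\!](\vec v_i)|^{\mathsf{sp}}_s\le_s b$ and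 $\mathsf{interp}^{\mathsf{sp}}_s([\![\mathsf{op}]\!](\vec v_i))=[\![\mathsf{op}]\!]_{\mathsf{msg}}(\mathsf{interp}^{\mathsf{sp}}_{s_1}(v_1),\dots)$; and (Downwards Closed) if $[\![\mathsf{op}]\!]^{\mathsf{topub}(\mathsf{sp})}_{\mathsf{bnd}}(\vec b_i)=b$ is defined and $b_i'\le_{s_i}b_i$ for all $i$, then $[\![\mathsf{op}]\!]^{\mathsf{topub}(\mathsf{sp})}_{\mathsf{bnd}}(\vec b_i')=b'$ is defined with $b'\le_s b$. Expressions: $e::=x\mid v\mid\mathsf{op}(e_1,\dots,e_n)$ with $v\in[\![s]\!]$, $s\in\{\mathsf{msg},\mathsf{plain}\}$. A substitution $\gamma$ maps variables to values in $[\![\mathsf{msg}]\!]\cup[\![\mathsf{plain}]\!]\cup[\![\mathsf{cipher}]\!]$. Ordinary evaluation $\langle\gamma,e\rangle\Downarrow v$: $\langle\gamma,x\rangle\Downarrow\gamma(x)$; $\langle\gamma,v\rangle\Downarrow v$; if $\mathsf{op}:\vec s_i\to s$ and $\langle\gamma,e_i\rangle\Downarrow v_i\in[\![s_i]\!]$ for all $i$, then $\langle\gamma,\mathsf{op}(\vec e_i)\rangle\Downarrow[\![\mathsf{op}]\!](\vec v_i)$. Cleartext evaluation $\langle\gamma,e\rangle\Downarrow^{\mathsf{sp}}_{\mathsf{msg}}v$ (for substitutions into $[\![\mathsf{msg}]\!]$): $\langle\gamma,x\rangle\Downarrow^{\mathsf{sp}}_{\mathsf{msg}}\gamma(x)$;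 for $v\in[\![s]\!]$, $\langle\gamma,v\rangle\Downarrow^{\mathsf{sp}}_{\mathsf{msg}}\mathsf{interp}^{\mathsf{sp}}_s(v)$; if $\mathsf{op}:\vec s_i\to s$ and $\langle\gamma,e_i\rangle\Downarrow^{\mathsf{sp}}_{\mathsf{msg}}v_i$ for all $i$, then $\langle\gamma,\mathsf{op}(\vec e_i)\rangle\Downarrow^{\mathsf{sp}}_{\mathsf{msg}}[\![\mathsf{op}]\!]_{\mathsf{msg}}(\vec v_i)$. Types are $s\ \alpha$ with $\alpha\in B_s$; $|s\ \alpha|=\alpha$, $\mathsf{sort}(s\ \alpha)=s$; $s\ \alpha\le s\ \alpha'$ iff $\alpha\le_s\alpha'$. A context $\Gamma$ is a finite map from variables to types. Typing $\mathsf{pp};\Gamma\vdash e:\tau$: if $x:\tau\in\Gamma$ then $\mathsf{pp};\Gamma\vdash x:\tau$; if $\mathsf{pp};\Gamma\vdash e:\tau$ and $\tau\le\tau'$ then $\mathsf{pp};\Gamma\vdash e:\tau'$; if $\mathsf{sort}(v)=s$ then $\mathsf{pp};\Gamma\vdash v:s\ |v|^{\mathsf{pp}}_s$; if $\mathsf{op}:\vec s_i\to s$, $\mathsf{pp};\Gamma\vdash e_i:\tau_i$ with $\mathsf{sort}(\tau_i)=s_i$, and $[\![\mathsf{op}]\!]^{\mathsf{pp}}_{\mathsf{bnd}}(|\tau_1|,\dots,|\tau_n|)=\alpha$ is defined, then $\mathsf{pp};\Gamma\vdash\mathsf{op}(\vec e_i):s\ \alpha$. Semantic types: $[\![s\ \alpha]\!]^{\mathsf{sp}}=\{v\in[\![s]\!]\mid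 |v|^{\mathsf{sp}}_s\le_s\alpha\}$. $\mathsf{sp};\Gamma\vDash\gamma$ means: for every $x$ in the domain of $\Gamma$, $x$ is in the domain of $\gamma$ and $\gamma(x)\in[\![\Gamma(x)]\!]^{\mathsf{sp}}$. For such $\gamma$, $\mathsf{interp}^{\mathsf{sp}}_\Gamma(\gamma)$ is the substitution $\{x\mapsto\mathsf{interp}^{\mathsf{sp}}_{\mathsf{sort}(\Gamma(x))}(\gamma(x))\}$ over the variables $x$ of $\Gamma$. *)

(* Defs.v *)
From Stdlib Require Import List.
Set Implicit Arguments.

Inductive sort := Smsg | Splain | Scipher.

Fixpoint hprod (F : sort -> Type) (l : list sort) : Type :=
  match l with nil => unit | s :: l' => (F s * hprod F l')%type end.

Fixpoint hmap (F G : sort -> Type) (f : forall s, F s -> G s) (l : list sort)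
  : hprod F l -> hprod G l :=
  match l return hprod F l -> hprod G l with
  | nil => fun _ => tt
  | s :: l' => fun p => (f s (fst p), @hmap F G f l' (snd p))
  end.

Fixpoint hall2 (F : sort -> Type) (R : forall s, F s -> F s -> Prop) (l : list sort)
  : hprod F l -> hprod F l -> Prop :=
  match l return hprod F l -> hprod F l -> Prop with
  | nil => fun _ _ => True
  | s :: l' => fun p q => R s (fst p) (fst q) /\ @hall2 F R l' (snd p) (snd q)
  end.

Arguments hmap {F G} f {l} _.
Arguments hall2 {F} R {l} _ _.

Record ILA := {
  PP : Type;
  SP : Type;
  topub : SP -> PP;
  carrier : sort -> Type;
  B : sort -> Type;
  ble : forall s, B s -> B s -> Prop;
  ble_refl : forall s a, @ble s a a;
  ble_trans : forall s a b c, @ble s a b -> @ble s b c -> @ble s a c;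
  ble_antisym : forall s a b, @ble s a b -> @ble s b a -> a = b;
  norm_msg : PP -> carrier Smsg -> B Smsg;
  norm_plain : PP -> carrier Splain -> B Splain;
  norm_cipher : SP -> carrier Scipher -> B Scipher;
  interp_plain : PP -> carrier Splain -> carrier Smsg;
  interp_cipher : SP -> carrier Scipher -> carrier Smsg;
  op : Type;
  op_args : op -> list sort;
  op_res : op -> sort;
  op_sem : forall o, hprod carrier (op_args o) -> carrier (op_res o);
  op_bnd : forall o, PP -> hprod B (op_args o) -> option (B (op_res o));
  op_msg : forall o, hprod (fun _ => carrier Smsg) (op_args o) -> carrier Smsg
}.

Section Model.
Variable M : ILA.

Definition normsp (sp : SP M) (s : sort) : carrier M s -> B M s :=
  match s return carrier M s -> B M s with
  | Smsg => norm_msg M (topub M sp)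
  | Splain => norm_plain M (topub M sp)
  | Scipher => norm_cipher M sp
  end.

Arguments normsp sp {s} _.

Definition interp (sp : SP M) (s : sort) : carrier M s -> carrier M Smsg :=
  match s return carrier M s -> carrier M Smsg with
  | Smsg => fun m => m
  | Splain => interp_plain M (topub M sp)
  | Scipher => interp_cipher M sp
  end.

Arguments interp sp {s} _.

Definition valid : Prop :=
  (forall (sp : SP M) (o : op M) (vs : hprod (carrier M) (op_args M o)) b,
     op_bnd M o (topub M sp) (hmap (fun s => @normsp sp s) vs) = Some b ->
     ble M _ (normsp sp (op_sem M o vs)) b /\
     interp sp (op_sem M o vs) = op_msg M o (hmap (fun s => @interp sp s) vs))
  /\
  (forall (sp : SP M) (o : op M) (bs bs' : hprod (B M) (op_args M o)) b,
     op_bnd M o (topub M sp) bs = Some b ->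
     hall2 (ble M) bs' bs ->
     exists b', op_bnd M o (topub M sp) bs' = Some b' /\ ble M _ b' b).

Definition value := {s : sort & carrier M s}.
Definition vsort (v : value) : sort := projT1 v.

Definition var := nat.

Inductive expr :=
| EVar (x : var)
| EMsg (m : carrier M Smsg)
| EPlain (p : carrier M Splain)
| EOp (o : op M) (es : list expr).

Inductive eval (g : var -> option value) : expr -> value -> Prop :=
| ev_var x v : g x = Some v -> eval g (EVar x) v
| ev_msg m : eval g (EMsg m) (existT _ Smsg m)
| ev_plain p : eval g (EPlain p) (existT _ Splain p)
| ev_op o es (vs : hprod (carrier M) (op_args M o)) :
    evals g es (op_args M o) vs ->
    eval g (EOp o es) (existT _ (op_res M o) (op_sem M o vs))
with evals (g : var -> option value)
  : list expr -> forall l : list sort, hprod (carrier M) l -> Prop :=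
| evs_nil : evals g nil nil tt
| evs_cons e es s l (v : carrier M s) (vs : hprod (carrier M) l) :
    eval g e (existT _ s v) -> evals g es l vs -> evals g (e :: es) (s :: l) (v, vs).

Inductive ceval (sp : SP M) (g : var -> option (carrier M Smsg))
  : expr -> carrier M Smsg -> Prop :=
| cev_var x m : g x = Some m -> ceval sp g (EVar x) m
| cev_msg m : ceval sp g (EMsg m) (interp sp (s := Smsg) m)
| cev_plain p : ceval sp g (EPlain p) (interp sp (s := Splain) p)
| cev_op o es (ms : hprod (fun _ => carrier M Smsg) (op_args M o)) :
    cevals sp g es (op_args M o) ms ->
    ceval sp g (EOp o es) (op_msg M o ms)
with cevals (sp : SP M) (g : var -> option (carrier M Smsg))
  : list expr -> forall l : list sort, hprod (fun _ => carrier M Smsg) l -> Prop :=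
| cevs_nil : cevals sp g nil nil tt
| cevs_cons e es s l m (ms : hprod (fun _ => carrier M Smsg) l) :
    ceval sp g e m -> cevals sp g es l ms -> cevals sp g (e :: es) (s :: l) (m, ms).

Inductive ty := Ty (s : sort) (a : B M s).
Definition tsort (t : ty) : sort := let (s, _) := t in s.

Inductive tle : ty -> ty -> Prop :=
| tle_intro s (a a' : B M s) : ble M _ a a' -> tle (Ty s a) (Ty s a').

Definition ctx := var -> option ty.

Inductive typing (pp : PP M) (G : ctx) : expr -> ty -> Prop :=
| ty_var x t : G x = Some t -> typing pp G (EVar x) t
| ty_sub e t t' : typing pp G e t -> tle t t' -> typing pp G e t'
| ty_msg m : typing pp G (EMsg m) (Ty Smsg (norm_msg M pp m))
| ty_plain p : typing pp G (EPlain p) (Ty Splain (norm_plain M pp p))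
| ty_op o es (bs : hprod (B M) (op_args M o)) a :
    typings pp G es (op_args M o) bs ->
    op_bnd M o pp bs = Some a ->
    typing pp G (EOp o es) (Ty (op_res M o) a)
with typings (pp : PP M) (G : ctx)
  : list expr -> forall l : list sort, hprod (B M) l -> Prop :=
| tys_nil : typings pp G nil nil tt
| tys_cons e es s l (a : B M s) (bs : hprod (B M) l) :
    typing pp G e (Ty s a) -> typings pp G es l bs ->
    typings pp G (e :: es) (s :: l) (a, bs).

Inductive semty (sp : SP M) : ty -> value -> Prop :=
| semty_intro s (a : B M s) (v : carrier M s) :
    ble M _ (normsp sp v) a -> semty sp (Ty s a) (existT _ s v).

Definition semctx (sp : SP M) (G : ctx) (g : var -> option value) : Prop :=
  forall x t, G x = Some t -> exists v, g x = Some v /\ semty sp t v.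

(* interp^sp_Gamma(gamma): defined on the variables of Gamma.  We use the sort
   of gamma(x), which equals sort(Gamma(x)) whenever sp;Gamma |= gamma. *)
Definition interp_ctx (sp : SP M) (G : ctx) (g : var -> option value)
  : var -> option (carrier M Smsg) :=
  fun x => match G x, g x with
           | Some _, Some v => Some (interp sp (projT2 v))
           | _, _ => None
           end.

End Model.

Arguments normsp {M} sp {s} _.
Arguments interp {M} sp {s} _.
Arguments interp_ctx {M} sp G g _.
Arguments semctx {M} sp G g.
Arguments ceval {M} sp g _ _.
Arguments eval {M} g _ _.
Arguments typing {M} pp G _ _.

(* Main.v *)
Require Import Defs.

Scheme typing_mut := Induction for typing Sort Prop
  with typings_mut := Induction for typings Sort Prop.

Lemma semty_iff (M : ILA) (sp : SP M) (t : ty M) (v : value M) :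
  semty sp t v <->
  match t with Ty _ s a => exists x : carrier M s, v = existT _ s x /\ ble M s (normsp sp x) a end.
Proof.
  split.
  - destruct 1. eauto.
  - destruct t as [s a]. intros [x [-> H]]. constructor. exact H.
Qed.

Theorem mainTheorem3 (M : ILA) (Hvalid : valid M) (sp : SP M)
  (G : ctx M) (e : expr M) (t : ty M) (g : var -> option (value M)) :
  typing (topub M sp) G e t ->
  semctx sp G g ->
  exists (v : value M) (vm : carrier M Smsg),
    eval g e v /\
    ceval sp (interp_ctx sp G g) e vm /\
    interp sp (projT2 v) = vm.
Proof.
  intros Hty Hg.
  destruct Hvalid as [Hcomm Hdown].
  enough (H : exists v, eval g e v /\ semty sp t v /\
                        ceval sp (interp_ctx sp G g) e (interp sp (projT2 v))).
  { destruct H as [v [H1 [_ H3]]]. exists v, (interp sp (projT2 v)). auto. }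
  induction Hty using typing_mut with
    (P0 := fun es l bs _ =>
       exists vs : hprod (carrier M) l,
         evals g es l vs /\ hall2 (ble M) (hmap (fun s => @normsp M sp s) vs) bs /\
         cevals sp (interp_ctx sp G g) es l (hmap (fun s => @interp M sp s) vs)).
  - destruct (Hg x t e) as [v [Hx Hs]].
    exists v. split; [constructor; exact Hx|]. split; [exact Hs|].
    constructor. unfold interp_ctx. rewrite e, Hx. reflexivity.
  - destruct IHHty as [v [H1 [H2 H3]]]. exists v. split; [exact H1|]. split; [|exact H3].
    destruct t0 as [tu tv]. apply semty_iff. apply semty_iff in H2.
    destruct H2 as [x [-> Hb]].
    exists x. split; [reflexivity|].
    eapply ble_trans; eauto.
  - exists (existT _ Smsg m). split; [constructor|]. split.
    + constructor. apply ble_refl.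
    + constructor.
  - exists (existT _ Splain p). split; [constructor|]. split.
    + constructor. apply ble_refl.
    + constructor.
  - destruct IHHty as [vs [H1 [H2 H3]]].
    destruct (Hdown sp o bs _ a ltac:(assumption) H2) as [b' [Hb' Hle]].
    destruct (Hcomm sp o vs b' Hb') as [Hn Hi].
    exists (existT _ (op_res M o) (op_sem M o vs)). split; [constructor; exact H1|]. split.
    + constructor. eapply ble_trans; eauto.
    + simpl. rewrite Hi. constructor. exact H3.
  - exists tt. split; [constructor|]. split; [exact I|constructor].
  - destruct IHHty as [v [H1 [H2 H3]]].
    destruct IHHty0 as [vs [K1 [K2 K3]]].
    apply semty_iff in H2. destruct H2 as [x [-> Hb]].
    exists (x, vs). split; [constructor; assumption|]. split.
    + simpl. split; assumption.
    + simpl. constructor; assumption.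
Qed.
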